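(* For each $k\in\{2,3,4,5,6\}$, the pagenumber of the complete bipartite graph $K_{k+1,\lfloor (k+1)^2/4\rfloor+1}$ is $k+1$.
   Context: A book with $k$ pages consists of a line (the spine) and $k$ half-planes (the pages) whose common boundary is the spine. A $k$-page drawing of a graph places all vertices on the spine and draws each edge inside a single page; a $k$-page embedding is a $k$-page drawing with no edge crossings. The pagenumber of a graph $G$ is the minimum $k$ such that $G$ admits a $k$-page embedding. *)

(* Defs.v *)
From mathcomp Require Import all_boot.
Set Implicit Arguments. Unset Strict Implicit. Unset Printing Implicit Defensive.

(* A graph is a finite vertex type V with an adjacency relation E
   (assumed symmetric and irreflexive for the graphs we consider). *)

(* Combinatorial book embedding: the spine order is given by an injective
   position map pos : V -> nat; each edge {u,v} gets a page in 'I_k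
   (the assignment is symmetric in u v); two edges on the same page must not
   cross, i.e. their endpoints must not interleave along the spine. *)
Definition book_embedding (V : finType) (E : rel V) (k : nat)
    (pos : V -> nat) (page : V -> V -> 'I_k) : Prop :=
  injective pos /\
  (forall u v, E u v -> page u v = page v u) /\
  (forall u v x y, E u v -> E x y -> page u v = page x y ->
     ~ (pos u < pos x /\ pos x < pos v /\ pos v < pos y)).

Definition has_k_page_embedding (V : finType) (E : rel V) (k : nat) : Prop :=
  exists (pos : V -> nat) (page : V -> V -> 'I_k), book_embedding E pos page.

Definition is_pagenumber (V : finType) (E : rel V) (p : nat) : Prop :=
  has_k_page_embedding E p /\
  (forall q, has_k_page_embedding E q -> p <= q).

Definition Kbip_rel (m n : nat) : rel ('I_m + 'I_n) :=
  fun u v =>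
    match u, v with
    | inl _, inr _ => true
    | inr _, inl _ => true
    | _, _ => false
    end.

(* Main.v *)
Require Import Defs.
From mathcomp Require Import all_boot zify.
Set Implicit Arguments. Unset Strict Implicit. Unset Printing Implicit Defensive.


Inductive cell := Asg of nat | Fr of seq bool.

Fixpoint clearb (c : nat) (s : seq bool) : seq bool :=
  match s with
  | [::] => [::]
  | b :: s' => match c with 0 => false :: s' | c'.+1 => b :: clearb c' s' end
  end.

Fixpoint pickmin (cs : seq cell) (i : nat) (best : option (nat * seq bool * nat)) :=
  match cs with
  | [::] => best
  | Asg _ :: cs' => pickmin cs' i.+1 best
  | Fr msk :: cs' =>
      let c := count id msk in
      match best with
      | Some (_, _, bc) => if c < bc then pickmin cs' i.+1 (Some (i, msk, c))
                           else pickmin cs' i.+1 best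
      | None => pickmin cs' i.+1 (Some (i, msk, c))
      end
  end.

Fixpoint upd (c : nat) (x : option nat) (row : seq bool) (cs : seq cell) : seq cell :=
  match cs with
  | [::] => [::]
  | a :: cs' =>
    let r := head false row in
    match x with
    | Some 0 => Asg c :: upd c None (behead row) cs'
    | _ => (match a with Fr mk => if r then Fr (clearb c mk) else a | Asg _ => a end)
             :: upd c (match x with Some x'.+1 => Some x' | _ => None end) (behead row) cs'
    end
  end.

Fixpoint search (k : nat) (rows : seq (seq bool)) (fuel : nat) (cs : seq cell) (used : nat) : bool :=
  match fuel with
  | 0 => true
  | fuel'.+1 =>
    match pickmin cs 0 None with
    | None => true
    | Some (x, msk, _) =>
      let row := nth [::] rows x in
      has (fun c => if nth false msk c then if c <= used then
                    search k rows fuel' (upd c (Some x) row cs) (maxn used c.+1) else false else false)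
          (iota 0 k)
    end
  end.

Definition crossb (e e' : nat * nat) : bool :=
  ((e.1 < e'.1) && (e'.1 < e.2) && (e.2 < e'.2)) ||
  ((e'.1 < e.1) && (e.1 < e'.2) && (e'.2 < e.2)).

Definition edges (N : nat) (s : seq bool) : seq (nat * nat) :=
  [seq pq <- [seq (p, q) | p <- iota 0 N, q <- iota 0 N] |
     (pq.1 < pq.2) && (nth false s pq.1 != nth false s pq.2)].

Definition sedges (N : nat) (s : seq bool) : seq (nat * nat) :=
  let es := edges N s in
  let na := count id s in
  let nb := N - na in
  let des := [seq (let ins := take (e.2 - e.1.+1) (drop e.1.+1 s) in
                   let ai := count id ins in let bi := size ins - ai in
                   ai * (nb - bi).-1 + bi * (na - ai).-1, e) | e <- es] in
  map snd (sort (fun d d' => d'.1 <= d.1) des).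

Definition fails (N k : nat) (s : seq bool) : bool :=
  let es := sedges N s in
  let rows := [seq [seq crossb e e' | e' <- es] | e <- es] in
  ~~ search k rows (size es) (nseq (size es) (Fr (nseq k true))) 0.

Fixpoint lexle (s t : seq bool) : bool :=
  match s, t with
  | b :: s', c :: t' => if b == c then lexle s' t' else c
  | _, _ => true
  end.

Definition canon (N : nat) (s : seq bool) : bool :=
  all (fun j => if lexle s (rot j s) then lexle s (rot j (rev s)) else false) (iota 0 N).

Fixpoint gen (t : nat) : nat -> seq (seq bool) :=
  match t with
  | 0 => fun f => [:: nseq f false]
  | t'.+1 => fix genf (f : nat) : seq (seq bool) :=
      match f with
      | 0 => [:: nseq t true]
      | f'.+1 => [seq true :: w | w <- gen t' f] ++ [seq false :: w | w <- genf f']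
      end
  end.

Definition check (m n k : nat) : bool :=
  all (fun s => if canon (m + n) s then fails (m + n) k s else true) (gen m n).

Lemma nth_clearb c mk c' : nth false (clearb c mk) c' = nth false mk c' && (c' != c).
Proof.
elim: mk c c' => [|b mk IH] [|c] [|c'] //=; rewrite ?andbT ?andbF //.
by rewrite IH.
Qed.

Definition c0 := Fr [::].

Lemma pickmin_spec cs i best r : pickmin cs i best = Some r ->
  best = Some r \/ exists x msk c, r = (x, msk, c) /\ i <= x /\ x - i < size cs /\
     nth c0 cs (x - i) = Fr msk.
Proof.
elim: cs i best => [|a cs IH] i best /=; first by left.
case: a => [d|msk].
  move=> /IH [->|[x [mk [c [-> [h1 [h2 h3]]]]]]]; first by left.
  right; exists x, mk, c; split => //; split; first lia.
  have -> : x - i = (x - i.+1).+1 by lia.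
  by split => //; lia.
have H := IH i.+1.
have step : forall b, pickmin cs i.+1 b = Some r -> b = Some (i, msk, count id msk) -> 
   exists x msk0 c, r = (x, msk0, c) /\ i <= x /\ x - i < (size cs).+1 /\ nth c0 (Fr msk :: cs) (x - i) = Fr msk0.
  move=> b /H [Eb'|[x [mk [c [-> [h1 [h2 h3]]]]]]] Eb.
    by move: Eb; rewrite Eb' => -[->]; exists i, msk, (count id msk); rewrite subnn.
  exists x, mk, c; split => //; split; first lia.
  have -> : x - i = (x - i.+1).+1 by lia.
  by split => //; lia.
case: best => [[[x0 m0] bc]|].
  case: ifP => _.
    by move=> /step h; right; apply: h.
  by move=> /H [->|[x [mk [c [-> [h1 [h2 h3]]]]]]]; [left|right; exists x, mk, c;
    have -> : x - i = (x - i.+1).+1 by lia]; split => //; split; [lia|split => //; lia].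
by move=> /step h; right; apply: h.
Qed.

Definition updcell c (r : bool) (a : cell) := match a with Fr mk => if r then Fr (clearb c mk) else a | Asg _ => a end.

Lemma upd_None c row cs : size (upd c None row cs) = size cs /\
  forall y, y < size cs -> nth c0 (upd c None row cs) y = updcell c (nth false row y) (nth c0 cs y).
Proof.
elim: cs row => [|a cs IH] row /=; first by split.
split; first by rewrite (proj1 (IH _)).
case=> [|y] /= Hy; first by case: row.
by rewrite (proj2 (IH _) y Hy); case: row => [|r row]; rewrite ?nth_nil.
Qed.

Lemma upd_Some c row cs x : size (upd c (Some x) row cs) = size cs /\
  forall y, y < size cs -> nth c0 (upd c (Some x) row cs) y =
    if y == x then Asg c else updcell c (nth false row y) (nth c0 cs y).
Proof.
elim: cs row x => [|a cs IH] row x /=; first by split.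
case: x => [|x] /=.
  split; first by rewrite (proj1 (upd_None _ _ _)).
  case=> [|y] //= Hy; rewrite (proj2 (upd_None _ _ _) y Hy); by case: row => [|r row]; rewrite ?nth_nil.
split; first by rewrite (proj1 (IH _ _)).
case=> [|y] /= Hy; first by case: row.
rewrite (proj2 (IH _ _) y Hy); by case: row => [|r row]; rewrite ?nth_nil.
Qed.

Definition adj (rows : seq (seq bool)) i j := nth false (nth [::] rows i) j.

Definition CI k rows (cs : seq cell) := forall y msk c, y < size cs -> nth c0 cs y = Fr msk -> c < k ->
  nth false msk c = false -> exists z, nth c0 cs z = Asg c /\ adj rows z y /\ z < size cs.
Definition ub (cs : seq cell) used := forall z c, nth c0 cs z = Asg c -> c < used.
Definition ext (cs : seq cell) (f : nat -> nat) := forall z c, nth c0 cs z = Asg c -> f z = c.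

Lemma search_complete k rows fuel : forall cs used f,
  CI k rows cs -> ub cs used -> used <= k -> ext cs f ->
  (forall i, i < size cs -> f i < k) ->
  (forall i j, i < size cs -> j < size cs -> adj rows i j -> f i != f j) ->
  search k rows fuel cs used.
Proof.
elim: fuel => [|fuel IH] cs used f Hci Hub Huk Hext Hb Hp //=.
case Hpk: (pickmin cs 0 None) => [[[x msk] cc]|] //.
have [//|[x' [msk' [c' [[<- <- _] [_ [Hx Hxn]]]]]]] := pickmin_spec Hpk.
rewrite subn0 in Hx Hxn.
set row := nth [::] rows x.
suff key : forall g, ext cs g -> (forall i, i < size cs -> g i < k) ->
  (forall i j, i < size cs -> j < size cs -> adj rows i j -> g i != g j) -> g x <= used ->
  has (fun c => if nth false msk c then if c <= used then
                    search k rows fuel (upd c (Some x) row cs) (maxn used c.+1) else false else false)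
          (iota 0 k).
  have [lt|ge] := ltnP (f x) used; first exact: (key f Hext Hb Hp (ltnW lt)).
  pose sw c := if c == f x then used else if c == used then f x else c.
  have swinj : injective sw.
    move=> a b; rewrite /sw; case: (a =P f x); case: (b =P f x); case: (a =P used); case: (b =P used); lia.
  have Hfx : f x < k by apply: Hb.
  apply: (key (fun i => sw (f i))).
  - move=> z c Hz; have := Hub _ _ Hz; rewrite /sw (Hext _ _ Hz) => Hc.
    by case: (c =P f x) => ?; [lia|case: (c =P used) => ?; [lia|]].
  - move=> i Hi; have := Hb _ Hi; rewrite /sw; case: (f i =P f x); case: (f i =P used); lia.
  - move=> i j Hi Hj Hij; apply/negP => /eqP /swinj /eqP; exact/negP/Hp.
  - by rewrite /sw eqxx.
move=> g Hge Hgb Hgp Hgu.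
have Hgk : g x < k by apply: Hgb.
apply/hasP; exists (g x); first by rewrite mem_iota /=.
have Hbit : nth false msk (g x).
  apply/negPn/negP => /negbTE Hf.
  have [z [Hz [Hadj Hzs]]] := Hci _ _ _ Hx Hxn Hgk Hf.
  by move: (Hgp _ _ Hzs Hx Hadj); rewrite (Hge _ _ Hz) eqxx.
rewrite Hbit Hgu.
have [Hsz Hnth] := upd_Some (g x) row cs x.
apply: (IH _ _ g).
- move=> y mk c Hy; rewrite Hsz in Hy; rewrite Hnth //.
  case: eqP => // Hyx.
  case Hcy: (nth c0 cs y) => [d|mk0] //=.
  case Hr: (nth false row y) => -[<-] Hc; rewrite ?nth_clearb => Hbc.
    have [Hb0|Hb0] := boolP (nth false mk0 c); last first.
      have [z [Hz [Hadj Hzs]]] := Hci _ _ _ Hy Hcy Hc (negbTE Hb0).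
      exists z; rewrite Hsz Hnth //; case: eqP => [Ez|_]; first by move: Hz; rewrite Ez Hxn.
      by rewrite Hz.
    move: Hbc; rewrite Hb0 /= => /negbFE /eqP ->.
    by exists x; rewrite Hsz Hnth // eqxx.
  have [z [Hz [Hadj Hzs]]] := Hci _ _ _ Hy Hcy Hc Hbc.
  exists z; rewrite Hsz Hnth //; case: eqP => [Ez|_]; first by move: Hz; rewrite Ez Hxn.
  by rewrite Hz.
- move=> z c; have [Hz|Hz] := ltnP z (size cs); last first.
    by rewrite nth_default ?Hsz.
  rewrite Hnth //; case: eqP => [_ [<-]|_]; first lia.
  case Hcz: (nth c0 cs z) => [d|mk0] /=; last by case: ifP.
  by move=> [<-]; have := Hub _ _ Hcz; lia.
- lia.
- move=> z c; have [Hz|Hz] := ltnP z (size cs); last first.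
    by rewrite nth_default ?Hsz.
  rewrite Hnth //; case: eqP => [-> [<-]//|_].
  case Hcz: (nth c0 cs z) => [d|mk0] /=; last by case: ifP.
  by move=> [<-]; apply: Hge.
- by rewrite Hsz.
- by rewrite Hsz.
Qed.

Definition PE N k (w : nat -> bool) (col : nat -> nat -> nat) : Prop :=
  (forall p q, p < N -> q < N -> w p != w q -> col p q < k) /\
  (forall p q, p < N -> q < N -> w p != w q -> col p q = col q p) /\
  (forall p x v y, y < N -> w p != w v -> w x != w y -> p < x -> x < v -> v < y ->
     col p v != col x y).

Lemma search_init k rows E f : (forall i, i < E -> f i < k) ->
  (forall i j, i < E -> j < E -> adj rows i j -> f i != f j) ->
  search k rows E (nseq E (Fr (nseq k true))) 0.
Proof.
move=> Hb Hp; apply: (@search_complete k rows E _ 0 f); rewrite ?size_nseq //.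
- move=> y msk c; rewrite size_nseq => Hy; rewrite nth_nseq Hy => -[<-] Hc.
  by rewrite nth_nseq Hc.
- by move=> z c; rewrite nth_nseq; case: ifP.
- by move=> z c; rewrite nth_nseq; case: ifP.
Qed.

Lemma mem_sedges N s e : e \in sedges N s -> e \in edges N s.
Proof.
rewrite /sedges.
set des := [seq _ | e0 <- edges N s].
have Hp : perm_eq (sort (fun d d' : nat * (nat * nat) => d'.1 <= d.1) des) des by rewrite perm_sort.
move=> He; have : e \in map snd des by rewrite -(perm_mem (perm_map snd Hp)).
by rewrite /des -map_comp map_id.
Qed.

Lemma mem_edges N s e : e \in edges N s ->
  [/\ e.1 < e.2, e.2 < N & nth false s e.1 != nth false s e.2].
Proof.
rewrite mem_filter => /andP [/andP [H1 H2]] /allpairsP [[p q] [/= Hp Hq He]].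
by move: Hq H1 H2; rewrite mem_iota add0n He /= => Hq H1 H2; split.
Qed.

Lemma fails_sound N k s : fails N k s -> forall col, ~ PE N k (nth false s) col.
Proof.
rewrite /fails => Hf col [P1 [P2 P3]].
set es := sedges N s in Hf.
set rows := [seq [seq crossb e e' | e' <- es] | e <- es] in Hf.
pose f i := col (nth (0,0) es i).1 (nth (0,0) es i).2.
have Hmem : forall i, i < size es -> [/\ (nth (0,0) es i).1 < (nth (0,0) es i).2, (nth (0,0) es i).2 < N &
   nth false s (nth (0,0) es i).1 != nth false s (nth (0,0) es i).2].
  by move=> i Hi; apply/mem_edges/mem_sedges/mem_nth.
move/negP: Hf; apply; apply: (@search_init _ _ _ f).
  move=> i Hi; have [h1 h2 h3] := Hmem i Hi; apply: P1 => //; lia.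
move=> i j Hi Hj; rewrite /adj /rows (nth_map (0,0)) // (nth_map (0,0)) // /crossb.
have [a1 a2 a3] := Hmem i Hi; have [b1 b2 b3] := Hmem j Hj.
rewrite /f; case/orP => /andP [/andP [h1 h2] h3].
  by apply: P3.
by rewrite eq_sym; apply: P3.
Qed.

Definition interleave a c b d : Prop :=
  (a < b /\ b < c /\ c < d) \/ (a < d /\ d < c /\ c < b) \/
  (c < b /\ b < a /\ a < d) \/ (c < d /\ d < a /\ a < b) \/
  (b < a /\ a < d /\ d < c) \/ (b < c /\ c < d /\ d < a) \/
  (d < a /\ a < b /\ b < c) \/ (d < c /\ c < b /\ b < a).

Lemma PEx N k w col a b c d : PE N k w col -> a < N -> b < N -> c < N -> d < N ->
  w a != w c -> w b != w d -> interleave a c b d -> col a c != col b d.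
Proof.
move=> [P1 [P2 P3]] Ha Hb Hc Hd Hac Hbd.
have Hca : w c != w a by rewrite eq_sym.
have Hdb : w d != w b by rewrite eq_sym.
rewrite /interleave.
case=> [[h1 [h2 h3]]|[[h1 [h2 h3]]|[[h1 [h2 h3]]|[[h1 [h2 h3]]|[[h1 [h2 h3]]|[[h1 [h2 h3]]|[[h1 [h2 h3]]|[h1 [h2 h3]]]]]]]]].
- exact: P3.
- by rewrite (P2 b d) //; apply: P3.
- by rewrite (P2 a c) //; apply: P3.
- by rewrite (P2 a c) // (P2 b d) //; apply: P3.
- by rewrite eq_sym; apply: P3.
- by rewrite eq_sym (P2 a c) //; apply: P3.
- by rewrite eq_sym (P2 b d) //; apply: P3.
- by rewrite eq_sym (P2 a c) // (P2 b d) //; apply: P3.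
Qed.

Lemma PE_perm N k w col (sg : nat -> nat) : PE N k w col -> (forall i, i < N -> sg i < N) ->
  (forall p x v y, p < x -> x < v -> v < y -> y < N -> interleave (sg p) (sg v) (sg x) (sg y)) ->
  PE N k (fun i => w (sg i)) (fun p q => col (sg p) (sg q)).
Proof.
move=> H Hs Hi; have [P1 [P2 P3]] := H.
split; first by move=> p q Hp Hq; apply: P1; apply: Hs.
split; first by move=> p q Hp Hq; apply: P2; apply: Hs.
move=> p x v y Hy Hpv Hxy Hpx Hxv Hvy.
apply: (PEx H) => //; try apply: Hs; try lia.
exact: Hi.
Qed.

Lemma PE_ext N k w w' col : PE N k w col -> (forall i, i < N -> w' i = w i) -> PE N k w' col.
Proof.
move=> [P1 [P2 P3]] E.
split; first by move=> p q Hp Hq; rewrite !E //; apply: P1.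
split; first by move=> p q Hp Hq; rewrite !E //; apply: P2.
move=> p x v y Hy H1 H2 Hpx Hxv Hvy.
have Hp : p < N by lia. have Hx : x < N by lia. have Hv : v < N by lia.
by rewrite !E // in H1 H2; apply: P3.
Qed.

Lemma PE_mono N k k' w col : k <= k' -> PE N k w col -> PE N k' w col.
Proof.
move=> Hk [P1 P2]; split => // p q Hp Hq H; have := P1 p q Hp Hq H; lia.
Qed.

Lemma nth_rot' (s : seq bool) N j i : size s = N -> j < N -> i < N ->
  nth false (rot j s) i = nth false s (if i + j < N then i + j else i + j - N).
Proof.
move=> Hs Hj Hi; rewrite /rot nth_cat size_drop Hs.
case: ifP => H1; case: ifP => H2; try lia.
  by rewrite nth_drop addnC.
rewrite nth_take; last lia.
congr nth; lia.
Qed.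

Lemma PE_rot N k s col j : size s = N -> j < N -> PE N k (nth false s) col ->
  exists col', PE N k (nth false (rot j s)) col'.
Proof.
move=> Hs Hj H.
pose sg i := if i + j < N then i + j else i + j - N.
exists (fun p q => col (sg p) (sg q)).
apply: (@PE_ext _ _ (fun i => nth false s (sg i))).
  apply: PE_perm => //.
    by move=> i Hi; rewrite /sg; case: ifP; lia.
  move=> p x v y h1 h2 h3 h4; rewrite /interleave /sg.
  case: ifP => ?; case: ifP => ?; case: ifP => ?; case: ifP => ?;
  first [ by exfalso; lia | by left; lia
        | by right; right; right; right; right; right; left; lia
        | by right; right; right; left; lia
        | by right; right; right; right; right; left; lia ].
by move=> i Hi; rewrite (@nth_rot' s N).

Qed.

Lemma PE_rev N k s col : size s = N -> PE N k (nth false s) col ->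
  exists col', PE N k (nth false (rev s)) col'.
Proof.
move=> Hs H.
pose sg i := N - i.+1.
exists (fun p q => col (sg p) (sg q)).
apply: (@PE_ext _ _ (fun i => nth false s (sg i))).
  apply: PE_perm => //.
    by move=> i Hi; rewrite /sg; lia.
  move=> p x v y h1 h2 h3 h4; rewrite /interleave /sg.
  by right; right; right; right; right; right; right; lia.
by move=> i Hi; rewrite nth_rev Hs.
Qed.

Fixpoint code (s : seq bool) : nat :=
  match s with [::] => 0 | b :: s' => b * 2 ^ size s' + code s' end.

Lemma code_lt s : code s < 2 ^ size s.
Proof. elim: s => [|b s IH] //=; rewrite expnS; case: b => /=; lia. Qed.

Lemma lexle_code s t : size s = size t -> lexle s t = false -> code t < code s.
Proof.
elim: s t => [|b s IH] [|c t] //= [Hst].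
case: eqP => [<- /IH|Hbc]; first by rewrite Hst; lia.
have := code_lt s; have := code_lt t; rewrite Hst.
by case: b c Hbc => [] [] //= _ h1 h2 _; lia.
Qed.

Definition Cw N m k s := [/\ size s = N, count id s = m & exists col, PE N k (nth false s) col].

Lemma Cw_rot N m k s j : Cw N m k s -> j < N -> Cw N m k (rot j s).
Proof.
move=> [Hs Hc [col H]] Hj; split; first by rewrite size_rot.
  by have /permP -> : perm_eq (rot j s) s by rewrite perm_rot.
exact: (PE_rot Hs Hj H).
Qed.

Lemma Cw_rev N m k s : Cw N m k s -> Cw N m k (rev s).
Proof.
move=> [Hs Hc [col H]]; split; first by rewrite size_rev.
  by rewrite count_rev.
exact: (PE_rev Hs H).
Qed.

Lemma canon_exists N m k : forall c s, code s <= c -> Cw N m k s ->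
  exists s', Cw N m k s' /\ canon N s'.
Proof.
elim=> [|c IH] s Hc HC; (case Hcan: (canon N s); first by exists s);
  move/negbT: Hcan; rewrite /canon -has_predC => /hasP [j];
  rewrite mem_iota add0n /= => Hj; have [Hs _ _] := HC;
  (case Hl1: (lexle s (rot j s)) => /=;
   [move=> /negbTE Hl2; have := lexle_code _ Hl2; rewrite size_rot size_rev => /(_ erefl) Hlt
   |move=> _; have := lexle_code _ Hl1; rewrite size_rot => /(_ erefl) Hlt]).
- lia.
- lia.
- apply: (IH (rot j (rev s))); first lia.
  apply: Cw_rot; [exact: Cw_rev | by []].
- apply: (IH (rot j s)); first lia.
  exact: Cw_rot.
Qed.

Lemma gen_eq0 f : gen 0 f = [:: nseq f false]. Proof. by []. Qed.
Lemma gen_eqS0 t : gen t.+1 0 = [:: nseq t.+1 true]. Proof. by []. Qed.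
Lemma gen_eqSS t f : gen t.+1 f.+1 = [seq true :: w | w <- gen t f.+1] ++ [seq false :: w | w <- gen t.+1 f].
Proof. by []. Qed.

Lemma count0 (s : seq bool) : count id s = 0 -> s = nseq (size s) false.
Proof. elim: s => [|[] s IH] //= H; by rewrite -IH. Qed.

Lemma countfull (s : seq bool) : count id s = size s -> s = nseq (size s) true.
Proof.
elim: s => [|[] s IH] //= H; first by rewrite -IH //; lia.
by have := count_size id s; lia.
Qed.

Lemma gen_complete s : forall t f, size s = t + f -> count id s = t -> s \in gen t f.
Proof.
elim: s => [|b s IH] [|t] [|f] //= Hs Hc.
- move: Hc; case: b => //= Hc; rewrite (count0 Hc) mem_seq1.
  by move: Hs => [->].
- move: Hs; rewrite addn0 => -[Hs]; move: Hc; case: b => /= Hc; last by have := count_size id s; lia.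
  have Hc' : count id s = size s by lia.
  by rewrite (countfull Hc') mem_seq1 Hs.
- rewrite mem_cat; case: b Hc => /= Hc.
  + apply/orP; left; rewrite mem_map; last by move=> x y [].
    apply: IH; lia.
  + apply/orP; right; rewrite mem_map; last by move=> x y [].
    have Hs' : size s = t.+1 + f by lia.
    exact: (IH t.+1 f Hs' Hc).
Qed.

Lemma check_sound m n k : check m n k -> forall q, q <= k ->
  ~ (exists s, Cw (m + n) m q s).
Proof.
move=> Hch q Hq [s [Hs Hc [col H]]].
have HC : Cw (m + n) m k s by split => //; exists col; exact: PE_mono H.
have [s' [[Hs' Hc' [col' H']] Hcan]] := canon_exists (leqnn _) HC.
have Hin : s' \in gen m n by apply: gen_complete.
move/allP: Hch => /(_ s' Hin); rewrite Hcan => Hf.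
exact: (fails_sound Hf H').
Qed.

Definition isl (m n : nat) (v : 'I_m + 'I_n) : bool := if v is inl _ then true else false.

Lemma Kbip_isl m n u v : Kbip_rel u v = (@isl m n u != isl v).
Proof. by case: u => u; case: v => v. Qed.

Lemma emb_Cw m n q (pos : 'I_m + 'I_n -> nat) (page : 'I_m + 'I_n -> 'I_m + 'I_n -> 'I_q) :
  0 < m -> book_embedding (@Kbip_rel m n) pos page -> exists s, Cw (m + n) m q s.
Proof.
move=> Hm [Hinj [Hsym Hcr]].
pose rk (v : 'I_m + 'I_n) := #|[pred u : 'I_m + 'I_n | pos u < pos v]|.
have rk_lt : forall u v, (pos u < pos v) = (rk u < rk v).
  move=> u v; case: (ltnP (pos u) (pos v)) => H.
    apply/esym; apply: proper_card; apply/properP; split.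
      by apply/subsetP => x; rewrite !inE => /ltn_trans; apply.
    by exists u; rewrite !inE ?ltnn.
  apply/esym/negbTE; rewrite -leqNgt; apply: subset_leq_card.
  by apply/subsetP => x; rewrite !inE => /leq_trans; apply.
have HN : #|{: 'I_m + 'I_n}| = m + n by rewrite card_sum !card_ord.
have rkN : forall v, rk v < m + n.
  move=> v; rewrite -HN; apply: proper_card; apply/properP; split.
    by apply/subsetP.
  by exists v; rewrite !inE ?ltnn.
have rkinj : injective rk.
  move=> u v E; apply: Hinj; case: (ltngtP (pos u) (pos v)) => //.
    by rewrite rk_lt E ltnn.
  by rewrite rk_lt E ltnn.
pose rk' (v : 'I_m + 'I_n) : 'I_(m + n) := Ordinal (rkN v).
have rk'inj : injective rk' by move=> u v [] /rkinj.
have rk'bij : bijective rk' by apply: inj_card_bij => //; apply: eq_leq; rewrite card_ord; exact: (esym HN).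
pose v0 : 'I_m + 'I_n := inl (Ordinal Hm).
pose at_ (i : nat) : 'I_m + 'I_n := odflt v0 [pick v | rk v == i].
have rk_at : forall i, i < m + n -> rk (at_ i) = i.
  move=> i Hi; rewrite /at_; case: pickP => [v /eqP //|H].
  have := inj_card_onto rk'inj _ (Ordinal Hi); have Hle : #|'I_(m+n)| <= #|{: 'I_m + 'I_n}| by rewrite card_ord HN. move=> /(_ Hle).
  case/codomP => v Ev; move/(f_equal val): Ev => /= Ev.
  by move: (H v); rewrite -Ev eqxx.
have at_rk : forall v, at_ (rk v) = v by move=> v; apply: rkinj; rewrite rk_at.
pose w i := isl (at_ i).
pose col p q := nat_of_ord (page (at_ p) (at_ q)).
exists (mkseq w (m + n)); split; first by rewrite size_mkseq.
- rewrite count_map (@eq_count _ _ w) // -sum1_count.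
  have -> : iota 0 (m + n) = index_iota 0 (m + n) by rewrite /index_iota subn0.
  rewrite big_mkord.
  rewrite (reindex rk'); last exact: onW_bij.
  rewrite big_sumType /=.
  have -> : \sum_(i < m | w (rk' (inl i))) 1 = \sum_(i < m) 1.
    by apply: eq_bigl => i; rewrite /w /= at_rk.
  have -> : \sum_(i < n | w (rk' (inr i))) 1 = 0.
    by rewrite big_pred0 // => i; rewrite /w /= at_rk.
  by rewrite sum1_card card_ord addn0.
exists col; apply: (@PE_ext _ _ w); last by move=> i Hi; rewrite nth_mkseq.
split; first by move=> p q' _ _ _; rewrite /col ltn_ord.
split.
  by move=> p q' _ _ H; rewrite /col Hsym // Kbip_isl.
move=> p x v y Hy Hpv Hxy Hpx Hxv Hvy; apply/negP => /eqP /val_inj Heq.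
apply: (Hcr _ _ _ _ _ _ Heq); rewrite ?Kbip_isl //.
rewrite !rk_lt !rk_at; lia.
Qed.

Lemma upper k n : has_k_page_embedding (@Kbip_rel k.+1 n) k.+1.
Proof.
pose pos (v : 'I_k.+1 + 'I_n) := match v with inl i => nat_of_ord i | inr j => k.+1 + j end.
pose page (u v : 'I_k.+1 + 'I_n) : 'I_k.+1 :=
  match u, v with inl i, _ => i | _, inl i => i | _, _ => ord0 end.
exists pos, page; split; [|split].
- move=> [i|j] [i'|j'] /= H.
  + by congr inl; apply: val_inj.
  + have := ltn_ord i; lia.
  + have := ltn_ord i'; lia.
  + by congr inr; apply: val_inj => /=; lia.
- by move=> [i|j] [i'|j'].
- move=> [i|j] [i'|j'] [x|x] [y|y] //= _ _ E; rewrite /pos;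
  try (move/(f_equal val): E => /= E); lia.
Qed.

Lemma chk2 : check 3 3 2. Proof. vm_cast_no_check (erefl true). Qed.
Lemma chk3 : check 4 5 3. Proof. vm_cast_no_check (erefl true). Qed.
Lemma chk4 : check 5 7 4. Proof. vm_cast_no_check (erefl true). Qed.
Lemma chk5 : check 6 10 5. Proof. vm_cast_no_check (erefl true). Qed.
Lemma chk6 : check 7 13 6. Proof. vm_cast_no_check (erefl true). Qed.

Lemma chk k : 2 <= k <= 6 -> check k.+1 ((k.+1 ^ 2) %/ 4).+1 k.
Proof.
move=> Hk; have : k = 2 \/ k = 3 \/ k = 4 \/ k = 5 \/ k = 6 by lia.
case=> [->|[->|[->|[->|->]]]]; [exact: chk2|exact: chk3|exact: chk4|exact: chk5|exact: chk6].
Qed.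

Theorem theorem3 (k : nat) : 2 <= k <= 6 ->
  is_pagenumber (@Kbip_rel k.+1 ((k.+1 ^ 2) %/ 4).+1) k.+1.
Proof.
move=> Hk; split; first exact: upper.
move=> q [pos [page Hemb]]; rewrite leqNgt; apply/negP => Hq.
have [s HC] := emb_Cw (ltn0Sn k) Hemb.
by apply: (check_sound (chk Hk) Hq); exists s.
Qed.
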